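(* Let $G$ be a group generated by a set $X=\{x_1,\dots,x_n\}$ of cardinality $n$ with non-trivial center $Z=Z(G)$. Let $\bar G=G/Z$ with generating set $\bar X$ the image of $X$. Suppose the commutator width $\mathrm{cw}(G)=l$ and $\mathrm{pw}(\bar G,\bar X)=k$ (both finite). Then $$\mathrm{pw}(G,X)\le n+l(2k+\varepsilon),$$ where $\varepsilon=0$ if $k$ is even and $\varepsilon=1$ if $k$ is odd.
   Context: A palindrome in a group generated by a set $X$ is an element represented by a reduced word in $X^{\pm1}$ reading the same forwards and backwards; $l_{\mathcal P}(g)$ is the minimal number of palindromes whose product is $g$; $\mathrm{pw}(G,X)=\sup_{g\in G}l_{\mathcal P}(g)$. The commutator is $[g,h]=g^{-1}h^{-1}gh$; the commutator length of $g\in G'=[G,G]$ is the minimal number of commutators whose product is $g$, and $\mathrm{cw}(G)$ is the supremum of commutator lengths over $G'$. *)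

(* Defs.v *)
From mathcomp Require Import all_boot.
Set Implicit Arguments.
Unset Strict Implicit.
Unset Printing Implicit Defensive.

Record group := Group {
  gcar :> Type;
  gmul : gcar -> gcar -> gcar;
  ginv : gcar -> gcar;
  gone : gcar;
  gmulA : forall a b c, gmul a (gmul b c) = gmul (gmul a b) c;
  gmul1 : forall a, gmul gone a = a;
  gmulV : forall a, gmul (ginv a) a = gone
}.

Section Defs.
Variable G : group.

Definition gprod (s : seq G) : G := foldr (@gmul G) (gone G) s.

Definition is_hom (H : group) (f : G -> H) : Prop :=
  forall a b, f (gmul a b) = gmul (f a) (f b).

Definition central (z : G) : Prop := forall g, gmul z g = gmul g z.

(* Words over the alphabet X^{+-1}, where X = {x_0,...,x_{n-1}} is indexed by 'I_n;
   the letter (i, false) stands for x_i and (i, true) for x_i^{-1}. *)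
Variable n : nat.
Variable x : 'I_n -> G.

Definition eval_letter (a : 'I_n * bool) : G :=
  if a.2 then ginv (x a.1) else x a.1.

Definition word_eval (w : seq ('I_n * bool)) : G :=
  gprod (map eval_letter w).

Fixpoint reduced (w : seq ('I_n * bool)) : bool :=
  match w with
  | a :: ((b :: _) as w') => ~~ ((a.1 == b.1) && (a.2 != b.2)) && reduced w'
  | _ => true
  end.

Definition generates : Prop := forall g : G, exists w, word_eval w = g.

Definition palindrome (g : G) : Prop :=
  exists w, [&& reduced w & rev w == w] /\ word_eval w = g.

Definition pw_le (m : nat) : Prop :=
  forall g : G, exists ps : seq G,
    size ps <= m /\ (forall i, i < size ps -> palindrome (nth (gone G) ps i))
    /\ gprod ps = g.

Definition pw_eq (k : nat) : Prop := pw_le k /\ forall m, pw_le m -> k <= m.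

End Defs.

Section Comm.
Variable G : group.

Definition comm (g h : G) : G := gmul (ginv g) (gmul (ginv h) (gmul g h)).

Definition comm_prod (s : seq (G * G)) : G := gprod (map (fun p => comm p.1 p.2) s).

Definition in_derived (g : G) : Prop := exists s, comm_prod s = g.

Definition cw_le (m : nat) : Prop :=
  forall g, in_derived g -> exists s, size s <= m /\ comm_prod s = g.

Definition cw_eq (l : nat) : Prop := cw_le l /\ forall m, cw_le m -> l <= m.

End Comm.

(* Main.v *)
Require Import Defs.
From mathcomp Require Import all_boot.
Set Implicit Arguments.
Unset Strict Implicit.
Unset Printing Implicit Defensive.

Section GL.
Variable G : group.
Implicit Types a b c : G.

Lemma mulgVr a : gmul a (ginv a) = gone G.
Proof.
transitivity (gmul (gmul (ginv (ginv a)) (ginv a)) (gmul a (ginv a))).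
  by rewrite gmulV gmul1.
by rewrite -gmulA (gmulA (ginv a)) gmulV gmul1 gmulV.
Qed.

Lemma mulg1 a : gmul a (gone G) = a.
Proof. by rewrite -(gmulV a) gmulA mulgVr gmul1. Qed.

Lemma mulKg a b : gmul (ginv a) (gmul a b) = b.
Proof. by rewrite gmulA gmulV gmul1. Qed.

Lemma mulKVg a b : gmul a (gmul (ginv a) b) = b.
Proof. by rewrite gmulA mulgVr gmul1. Qed.

Lemma mul_eq1 a b : gmul a b = gone G -> ginv a = b.
Proof. move=> H; transitivity (gmul (ginv a) (gmul a b)); first by rewrite H mulg1.
by rewrite mulKg. Qed.

Lemma invgK a : ginv (ginv a) = a.
Proof. by apply: mul_eq1; rewrite gmulV. Qed.

Lemma invgM a b : ginv (gmul a b) = gmul (ginv b) (ginv a).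
Proof. by apply: mul_eq1; rewrite -gmulA mulKVg mulgVr. Qed.

Lemma inv1 : ginv (gone G) = gone G.
Proof. by apply: mul_eq1; rewrite gmul1. Qed.

Lemma gprod_cat (s1 s2 : seq G) : gprod (s1 ++ s2) = gmul (gprod s1) (gprod s2).
Proof. elim: s1 => [|a s IH] /=; first by rewrite gmul1. by rewrite IH gmulA. Qed.

Lemma gprod_inv (s : seq G) : ginv (gprod s) = gprod (map (@ginv G) (rev s)).
Proof.
elim: s => [|a s IH] /=; first by rewrite inv1.
by rewrite invgM IH rev_cons map_rcons -cats1 gprod_cat /= mulg1.
Qed.

End GL.

Ltac gnorm := rewrite ?invgM ?invgK -?gmulA;
  rewrite ?mulKg ?mulKVg ?gmulV ?mulgVr ?gmul1 ?mulg1 ?mulKg ?mulKVg ?gmulV ?mulgVr ?gmul1 ?mulg1 ?mulKg ?mulKVg.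

Definition flip n (c : 'I_n * bool) := (c.1, ~~ c.2).
Definition cnc n (a b : 'I_n * bool) := (a.1 == b.1) && (a.2 != b.2).

Lemma flipK n : involutive (@flip n).
Proof. by case=> i b; rewrite /flip /= negbK. Qed.

Lemma cncC n (a b : 'I_n * bool) : cnc a b = cnc b a.
Proof. by rewrite /cnc eq_sym (eq_sym a.2). Qed.

Lemma cnc_flip n (a b : 'I_n * bool) : cnc (flip a) (flip b) = cnc a b.
Proof. by rewrite /cnc /=; case: a.2; case: b.2. Qed.

Lemma cnc_eq n (a b : 'I_n * bool) : cnc a b -> b = flip a.
Proof.
case: a b => i u [j v]; rewrite /cnc /flip /= => /andP[/eqP-> h].
by congr pair; case: u v h => [] [].
Qed.

Lemma reduced_map_flip n (w : seq ('I_n * bool)) : reduced (map (@flip n) w) = reduced w.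
Proof.
elim: w => [|a [|b w] IH] //=. move: IH => /= ->.
by have := cnc_flip a b; rewrite /cnc /flip /= => ->.
Qed.

Lemma reduced_rcons n (b : 'I_n * bool) s a :
  reduced (rcons (b :: s) a) = reduced (b :: s) && ~~ cnc (last b s) a.
Proof.
elim: s b => [|c s IH] b /=; first by rewrite andbT.
move: (IH c) => /= ->. by rewrite andbA.
Qed.

Section Words.
Variables (G : group) (n : nat) (x : 'I_n -> G).
Local Notation eval := (word_eval x).

Lemma eval_cat s t : eval (s ++ t) = gmul (eval s) (eval t).
Proof. by rewrite /word_eval map_cat gprod_cat. Qed.

Lemma eval_cons c s : eval (c :: s) = gmul (eval_letter x c) (eval s).
Proof. by []. Qed.

Lemma eval_letter_flip c : eval_letter x (flip c) = ginv (eval_letter x c).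
Proof. by case: c => i [] /=; rewrite ?invgK. Qed.

Lemma eval_inv w : ginv (eval w) = eval (map (@flip n) (rev w)).
Proof.
elim: w => [|c w IH]; first by rewrite /word_eval /= inv1.
rewrite eval_cons invgM IH rev_cons map_rcons -cats1 eval_cat.
by rewrite /word_eval /= mulg1 eval_letter_flip.
Qed.

Lemma eval_cancel c d : cnc c d ->
  gmul (eval_letter x c) (eval_letter x d) = gone G /\
  gmul (eval_letter x d) (eval_letter x c) = gone G.
Proof. by move=> /cnc_eq ->; rewrite eval_letter_flip mulgVr gmulV. Qed.

Lemma pal_conj a w : reduced w -> rev w == w -> palindrome x (eval (a ++ w ++ rev a)).
Proof.
elim/last_ind: a w => [|a c IH] w Hr Hp.
  by exists w; rewrite Hr Hp cats0.
have -> : rcons a c ++ w ++ rev (rcons a c) = a ++ (c :: rcons w c) ++ rev a.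
  by rewrite rev_rcons cat_rcons -cats1 /= -catA.
case: w Hr Hp => [|d w1] Hr Hp.
  by apply: IH => //=; rewrite !eqxx.
case Hcd: (cnc c d).
  have [h1 h2] := eval_cancel Hcd.
  case/lastP: w1 Hr Hp => [|w2 e] Hr Hp.
    have -> : eval (a ++ [:: c, d & rcons [::] c] ++ rev a) = eval (a ++ [:: c] ++ rev a).
      rewrite !eval_cat; congr gmul; congr gmul.
      by rewrite /word_eval /= gmulA h1 gmul1.
    by apply: IH.
  move/eqP: Hp; rewrite rev_cons rev_rcons /= => -[Hed Hw]; subst e.
  have Hw2 : rev w2 = w2 by case: (rcons_inj Hw).
  have Hr2 : reduced w2.
    move: Hr; rewrite -rcons_cons reduced_rcons => /andP[H _].
    by move: H; case: (w2) => //= ? ? /andP[].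
  have -> : eval (a ++ (c :: rcons (d :: rcons w2 d) c) ++ rev a) = eval (a ++ w2 ++ rev a).
    rewrite !eval_cat; congr gmul; congr gmul.
    rewrite -!cats1 /= !eval_cons !eval_cat /word_eval /= !mulg1.
    by rewrite gmulA h1 gmul1 -gmulA h2 mulg1.
  by apply: IH => //; rewrite Hw2.
apply: IH.
  have -> : reduced (c :: rcons (d :: w1) c) = ~~ cnc c d && reduced (rcons (d::w1) c) by [].
  rewrite Hcd reduced_rcons Hr /=.
  have : last d w1 = d.
    move/eqP: Hp => /(congr1 (last d)); rewrite rev_cons last_rcons /=.
    by [].
  by move=> ->; rewrite cncC Hcd.
by rewrite rev_cons rev_rcons (eqP Hp).
Qed.


Lemma reduced_nseq m (e : 'I_n * bool) : reduced (nseq m e).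
Proof.
elim: m => [|[|m] IH] //=. move: IH => /= ->. by rewrite !eqxx.
Qed.

Lemma pal_single i u : all (fun c : 'I_n * bool => c.1 == i) u -> palindrome x (eval u).
Proof.
move=> H.
suff [m [b ->]] : exists m b, eval u = eval (nseq m (i, b)).
  by exists (nseq m (i, b)); rewrite reduced_nseq rev_nseq eqxx.
elim: u H => [|c u IH] /=.
  by move=> _; exists 0, true.
move=> /andP[/eqP Hc /IH [m [b Hu]]].
case: m Hu => [|m] Hu.
  exists 1, c.2; rewrite eval_cons Hu /word_eval /=. by case: c Hc => ? ? /= ->.
case Hb: (c.2 == b).
  exists m.+2, b. rewrite eval_cons Hu. by case: c Hc Hb => ? ? /= -> /eqP ->.
exists m, b. rewrite eval_cons Hu [nseq m.+1 _]/= eval_cons gmulA.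
have -> : c = flip (i, b).
  by clear Hu; case: c Hc Hb => ? b0 /= ->; rewrite /flip /=; case: b; case: b0.
by rewrite eval_letter_flip gmulV gmul1.
Qed.

End Words.

Section Derived.
Variable G : group.
Implicit Types a b c : G.

Lemma D1 : in_derived (gone G).
Proof. by exists [::]. Qed.

Lemma DM a b : in_derived a -> in_derived b -> in_derived (gmul a b).
Proof.
move=> [s1 <-] [s2 <-]; exists (s1 ++ s2).
by rewrite /comm_prod map_cat gprod_cat.
Qed.

Lemma Dcomm a b : in_derived (comm a b).
Proof. by exists [:: (a, b)]; rewrite /comm_prod /= mulg1. Qed.

End Derived.

Section Ab.
Variables (G : group) (n : nat) (x : 'I_n -> G).
Local Notation eval := (word_eval x).

Lemma split_filter (p : pred ('I_n * bool)) w :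
  in_derived (gmul (ginv (gmul (eval (filter p w)) (eval (filter (predC p) w)))) (eval w)).
Proof.
elim: w => [|c w IH] /=.
  by rewrite /word_eval /= gmul1 inv1 gmul1; apply: D1.
case: (p c) => /=.
  rewrite !eval_cons. by move: IH; gnorm.
rewrite !eval_cons.
set F := eval (filter p w); set R := eval (filter (predC p) w); set e := eval w.
set C := eval_letter x c.
have -> : gmul (ginv (gmul F (gmul C R))) (gmul C e) =
  gmul (comm (gmul (ginv R) (gmul C R)) (gmul (ginv R) (gmul F R)))
       (gmul (ginv (gmul F R)) e).
  by rewrite /comm; gnorm.
by apply: DM => //; apply: Dcomm.
Qed.

Lemma ab_decomp (s : seq 'I_n) : uniq s -> forall w, all (fun c : 'I_n * bool => c.1 \in s) w ->
  in_derived (gmul (ginv (gprod [seq eval (filter (fun c : 'I_n * bool => c.1 == i) w) | i <- s])) (eval w)).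
Proof.
elim: s => [|i s IH] /=.
  move=> _ [|c w] //= _. by rewrite inv1 gmul1; apply: D1.
move=> /andP[Hi Hu] w Hw.
set p := (fun c : 'I_n * bool => c.1 == i).
have H1 := split_filter p w.
have Hw' : all (fun c : 'I_n * bool => c.1 \in s) (filter (predC p) w).
  rewrite all_filter; apply/allP => c Hc /=; apply/implyP => Hci.
  by move/allP: Hw => /(_ c Hc); rewrite inE; move: Hci; rewrite /p /= => /negbTE ->.
have H2 := IH Hu _ Hw'.
have E : [seq eval (filter (fun c : 'I_n * bool => c.1 == j) (filter (predC p) w)) | j <- s] =
         [seq eval (filter (fun c : 'I_n * bool => c.1 == j) w) | j <- s].
  apply/eq_in_map => j Hj; congr eval; rewrite -filter_predI; apply: eq_filter => c /=.
  rewrite /p; case E: (c.1 == j) => //=. move/eqP: E => ->.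
  by apply/negP => /eqP E; move: Hi; rewrite -E Hj.
rewrite E in H2.
set F := eval (filter p w) in H1 *; set R := eval (filter (predC p) w) in H1 H2.
set Q := gprod _ in H2 *.
have -> : gmul (ginv (gmul F Q)) (eval w) =
  gmul (gmul (ginv Q) R) (gmul (ginv (gmul F R)) (eval w)) by gnorm.
exact: DM.
Qed.

End Ab.

Definition good n (w : seq ('I_n * bool)) := reduced w && (rev w == w).

Section T.
Variables (G : group) (n : nat) (x : 'I_n -> G).
Local Notation eval := (word_eval x).

Fixpoint allpal (ps : seq G) : Prop :=
  match ps with [::] => True | p :: ps => palindrome x p /\ allpal ps end.

Lemma allpal_cat s t : allpal s -> allpal t -> allpal (s ++ t).
Proof. by elim: s => [|p s IH] //= [? ?] ?; split => //; apply: IH. Qed.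

Lemma allpal_nth s : allpal s -> forall i, i < size s -> palindrome x (nth (gone G) s i).
Proof. elim: s => [|p s IH] //= [Hp Hs] [|i] //= Hi. exact: IH. Qed.

Lemma allpal_map (T : eqType) (f : T -> G) (s : seq T) :
  (forall w, w \in s -> palindrome x (f w)) -> allpal (map f s).
Proof.
elim: s => [|a s IH] //= H; split; first by apply: H; rewrite inE eqxx.
by apply: IH => w Hw; apply: H; rewrite inE Hw orbT.
Qed.

Lemma Tlem (ws : seq (seq ('I_n * bool))) : all (@good n) ws -> forall a,
 (exists ps, size ps <= size ws + odd (size ws) /\ allpal ps /\
    gprod ps = gmul (eval a) (gmul (gprod (map eval ws)) (ginv (eval a)))) /\
 (exists ps, size ps <= size ws + ~~ odd (size ws) /\ allpal ps /\
    gprod ps = gmul (eval a) (gmul (gprod (map eval ws)) (eval (rev a)))).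
Proof.
elim: ws => [|w ws IH] /=.
  move=> _ a; split.
    by exists [::]; split => //; split => //=; rewrite gmul1 mulgVr.
  exists [:: eval (a ++ [::] ++ rev a)]; split => //; split.
    by split => //; apply: pal_conj.
  by rewrite /= mulg1 eval_cat gmul1.
move=> /andP[/andP[Hr Hp] Hall] a.
have [IH1 IH2] := IH Hall (map (@flip n) a).
have e1 : eval (map (@flip n) a) = ginv (eval (rev a)) by rewrite eval_inv revK.
have e2 : eval (rev (map (@flip n) a)) = ginv (eval a) by rewrite eval_inv map_rev.
split.
  have [ps [Hs [Hps E]]] := IH2.
  exists (eval (a ++ w ++ rev a) :: ps); split; first by rewrite /= addSn ltnS.
  split; first by split => //; apply: pal_conj.
  by rewrite /= E !eval_cat e1 e2; gnorm.
have [ps [Hs [Hps E]]] := IH1.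
exists (eval (a ++ w ++ rev a) :: ps); split; first by rewrite /= negbK addSn ltnS.
split; first by split => //; apply: pal_conj.
by rewrite /= E !eval_cat e1 invgK; gnorm.
Qed.

End T.

Lemma comm_central (G : group) (u z v : G) : central z -> comm (gmul u z) v = comm u v.
Proof.
move=> Hz; rewrite /comm invgM -!gmulA (Hz v).
have -> : gmul (ginv u) (gmul (ginv v) (gmul u (gmul v z))) = gmul (comm u v) z.
  by rewrite /comm -!gmulA.
by rewrite -Hz mulKg.
Qed.

Section Hom.
Variables (G H : group) (pi : G -> H).
Hypothesis Hh : is_hom pi.

Lemma pi1 : pi (gone G) = gone H.
Proof.
have h : gmul (pi (gone G)) (pi (gone G)) = pi (gone G) by rewrite -Hh gmul1.
transitivity (gmul (ginv (pi (gone G))) (gmul (pi (gone G)) (pi (gone G)))).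
  by rewrite mulKg.
by rewrite h gmulV.
Qed.

Lemma piV a : pi (ginv a) = ginv (pi a).
Proof. symmetry; apply: mul_eq1; by rewrite -Hh mulgVr pi1. Qed.

Lemma pi_gprod s : pi (gprod s) = gprod (map pi s).
Proof. elim: s => [|a s IH] /=; first exact: pi1. by rewrite Hh IH. Qed.

Lemma pi_eval n (x : 'I_n -> G) w : pi (word_eval x w) = word_eval (fun i => pi (x i)) w.
Proof.
rewrite /word_eval pi_gprod -map_comp; congr gprod; apply: eq_map => c /=.
by rewrite /eval_letter; case: c.2 => //; rewrite piV.
Qed.
End Hom.

Lemma pal_lift (H : group) n (X : 'I_n -> H) (qs : seq H) :
  (forall i, i < size qs -> palindrome X (nth (gone H) qs i)) ->
  exists ws, all (@good n) ws /\ map (word_eval X) ws = qs.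
Proof.
elim: qs => [|q qs IH] Hq; first by exists [::].
have [ws [Hws E]] : exists ws, all (@good n) ws /\ map (word_eval X) ws = qs.
  by apply: IH => i Hi; apply: (Hq i.+1).
have [w [Hw Ew]] := Hq 0 isT.
by exists (w :: ws); rewrite /= Hws E Ew andbT.
Qed.

Lemma arith m k : m <= k -> m + (m + odd m) <= 2 * k + odd k.
Proof.
rewrite leq_eqVlt => /orP[/eqP->|H]; first by rewrite addnA mul2n addnn.
apply: (@leq_trans (m + m).+1); first by rewrite addnA -addn1 leq_add2l leq_b1.
apply: (@leq_trans (2 * k)); last exact: leq_addr.
by rewrite mul2n -addnn -addSn leq_add // ltnW.
Qed.

Theorem proposition2p8 (G Gb : group) (n : nat) (x : 'I_n -> G)
  (pi : G -> Gb) (l k : nat) :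
  injective x ->
  generates x ->
  (exists z : G, central z /\ z <> gone G) ->
  is_hom pi ->
  (forall y : Gb, exists g : G, pi g = y) ->
  (forall g : G, pi g = gone Gb <-> central g) ->
  cw_eq G l ->
  pw_eq (fun i => pi (x i)) k ->
  pw_le x (n + l * (2 * k + odd k)).
Proof.
move=> _ Hgen _ Hh _ Hker [Hcw _] [Hpw _].
set K := 2 * k + odd k.
have Hc : forall u v : G, exists ps, size ps <= K /\ allpal x ps /\ gprod ps = comm u v.
  move=> u v.
  have [qs [Hsz [Hq Eq]]] := Hpw (pi u).
  have [ws [Hg Ews]] := pal_lift Hq.
  set u' := gprod (map (word_eval x) ws).
  have Hpu : pi u' = pi u.
    rewrite /u' (pi_gprod Hh) -map_comp -Eq -Ews; congr gprod; apply: eq_map => w /=.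
    exact: pi_eval.
  have Hz : central (gmul (ginv u') u).
    by apply/Hker; rewrite Hh (piV Hh) Hpu gmulV.
  have -> : u = gmul u' (gmul (ginv u') u) by rewrite mulKVg.
  rewrite comm_central //.
  have [a Ha] := Hgen (ginv v).
  have [[ps2 [Hs2 [Hp2 E2]]] _] := Tlem x Hg a.
  exists ([seq word_eval x (map (@flip n) w) | w <- rev ws] ++ ps2); split.
    rewrite size_cat size_map size_rev.
    have Hm : size ws <= k by rewrite -Ews size_map in Hsz.
    apply: leq_trans (arith Hm).
    by rewrite leq_add2l.
  split.
    apply: allpal_cat => //; apply: allpal_map => w; rewrite mem_rev => Hw.
    move/allP: Hg => /(_ w Hw) /andP[Hr Hp].
    exists (map (@flip n) w); split => //.
    by rewrite reduced_map_flip Hr -map_rev (eqP Hp) eqxx.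
  rewrite gprod_cat E2 Ha invgK /comm; congr gmul.
  rewrite /u' gprod_inv -map_rev -map_comp; congr gprod; apply/eq_in_map => w.
  rewrite mem_rev => Hw /=; rewrite eval_inv.
  by move/allP: Hg => /(_ w Hw) /andP[_ /eqP ->].
have Hcp : forall s : seq (G * G), exists ps, size ps <= size s * K /\ allpal x ps /\ gprod ps = comm_prod s.
  elim=> [|[u v] s [ps [Hs [Hp E]]]]; first by exists [::].
  have [cs [Hcs [Hcp Ec]]] := Hc u v.
  exists (cs ++ ps); split; first by rewrite size_cat mulSn leq_add.
  split; first exact: allpal_cat.
  by rewrite gprod_cat Ec E.
move=> g.
have [w Hw] := Hgen g.
have HD := @ab_decomp G n x (enum 'I_n) (enum_uniq _) w
  (introT allP (fun c _ => mem_enum _ c.1)).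
have [s [Hs Es]] := Hcw _ HD.
have [cs [Hcs [Hcp2 Ec]]] := Hcp s.
exists ([seq word_eval x (filter (fun c : 'I_n * bool => c.1 == i) w) | i <- enum 'I_n] ++ cs).
split.
  rewrite size_cat size_map size_enum_ord leq_add2l.
  by apply: leq_trans Hcs _; rewrite leq_mul2r Hs orbT.
split.
  apply: allpal_nth; apply: allpal_cat => //; apply: allpal_map => i _.
  by apply: (@pal_single G n x i); apply: filter_all.
by rewrite gprod_cat Ec Es mulKVg.
Qed.
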